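(* Let $(G,\precsim)$ be a compatible quasi-ordered abelian group and $H$ a $\precsim$-convex subgroup of $G$. The quasi-order induced on $G/H$ (defined by $g+H\precsim h+H\Leftrightarrow g-h\in H\vee(g-h\notin H\wedge g\precsim h)$) is valuational if and only if $G^o\subseteq H$. In particular, $G^o$ is the smallest convex subgroup of $G$ such that the induced quasi-order on $G/G^o$ is valuational.
   Context: A compatible quasi-ordered abelian group is an abelian group $G$ with a total quasi-order $\precsim$ (reflexive, transitive, any two elements comparable) such that, writing $a\sim b$ for $a\precsim b\wedge b\precsim a$: $(Q_1)$ $x\sim0\Rightarrow x=0$; $(Q_2)$ $x\precsim y\wedge y\not\sim z\Rightarrow x+z\precsim y+z$, for all $x,y,z$. With $cl(g)$ the $\sim$-class of $g$, $g$ is o-type if $cl(g)=\{g\}$ and $g$ is not of order $2$; $G^o$ is the set of o-type elements. $S$ is convex if $s,t\in S$, $s\precsim a\precsim t$ imply $a\in S$. A quasi-order $\precsim$ on an abelian group $A$ is valuational if there is a valuation $v$ on $A$ (a map $v:A\to\Gamma\cup\{\infty\}$, $\Gamma$ totally ordered, $\infty$ above $\Gamma$, with $v(a)=\infty\Leftrightarrow a=0$, $v(a+b)\ge\min(v(a),v(b))$, $v(-a)=v(a)$) such that $a\precsim b\Leftrightarrow v(b)\le v(a)$. *)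

(* Defs.v *)
From HB Require Import structures.
From mathcomp Require Import all_boot all_order all_algebra.
Set Implicit Arguments. Unset Strict Implicit. Unset Printing Implicit Defensive.
Import Order.TTheory GRing.Theory.
Local Open Scope ring_scope.

Section QOAG.
Variable G : zmodType.
Variable qle : G -> G -> Prop.

Definition qeq (a b : G) : Prop := qle a b /\ qle b a.

Definition compatible_qo : Prop :=
  (forall x, qle x x) /\
  (forall x y z, qle x y -> qle y z -> qle x z) /\
  (forall x y, qle x y \/ qle y x) /\
  (forall x, qeq x 0 -> x = 0) /\
  (forall x y z, qle x y -> ~ qeq y z -> qle (x + z) (y + z)).

Definition order2 (g : G) : Prop := g <> 0 /\ g + g = 0.

Definition otype (g : G) : Prop :=
  (forall h, qeq h g <-> h = g) /\ ~ order2 g.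

Definition subgroup (H : G -> Prop) : Prop :=
  H 0 /\ forall x y, H x -> H y -> H (x - y).

Definition convex (S : G -> Prop) : Prop :=
  forall s t a, S s -> S t -> qle s a -> qle a t -> S a.

(* induced quasi-order on G/H, expressed on representatives *)
Definition quot_qle (H : G -> Prop) (g h : G) : Prop :=
  H (g - h) \/ (~ H (g - h) /\ qle g h).

End QOAG.

(* Gamma ∪ {∞} encoded as option Gamma, None = ∞ *)
Definition le_inf d (Gam : orderType d) (x y : option Gam) : bool :=
  match x, y with
  | _, None => true
  | None, Some _ => false
  | Some a, Some b => (a <= b)%O
  end.

Definition min_inf d (Gam : orderType d) (x y : option Gam) : option Gam :=
  if le_inf x y then x else y.

(* A valuation on the quotient G/H, represented as an H-invariant map on G
   (i.e. a map on cosets), inducing the quasi-order [quot_qle qle H]. *)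
Definition quot_valuational (G : zmodType) (qle : G -> G -> Prop)
    (H : G -> Prop) : Prop :=
  exists (d : Order.disp_t) (Gam : orderType d) (v : G -> option Gam),
    (forall a b, H (a - b) -> v a = v b) /\
    (forall a, v a = None <-> H a) /\
    (forall a b, le_inf (min_inf (v a) (v b)) (v (a + b))) /\
    (forall a, v (- a) = v a) /\
    (forall a b, quot_qle qle H a b <-> le_inf (v b) (v a)).

(* Main.v *)
From HB Require Import structures.
Require Import Defs.
From mathcomp Require Import all_boot all_order all_algebra.
From Stdlib Require Import ClassicalEpsilon FunctionalExtensionality PropExtensionality.
Set Implicit Arguments. Unset Strict Implicit. Unset Printing Implicit Defensive.
Import GRing.Theory.
Local Open Scope ring_scope.

Section Basic.
Variables (G : zmodType) (le : G -> G -> Prop).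
Hypothesis hG : compatible_qo le.
Local Notation eqv := (qeq le).

Lemma lrefl x : le x x. Proof. by case: hG. Qed.
Lemma ltrans x y z : le x y -> le y z -> le x z.
Proof. by case: hG => _ [h _]; apply: h. Qed.
Lemma ltot x y : le x y \/ le y x. Proof. by case: hG => _ [_ [h _]]. Qed.
Lemma lq1 x : eqv x 0 -> x = 0. Proof. by case: hG => _ [_ [_ [h _]]]; apply: h. Qed.
Lemma lq2 x y z : le x y -> ~ eqv y z -> le (x + z) (y + z).
Proof. by case: hG => _ [_ [_ [_ h]]]; apply: h. Qed.
Lemma lq2' x y z a b : le x y -> ~ eqv y z -> a = x + z -> b = y + z -> le a b.
Proof. by move=> h1 h2 -> ->; apply: lq2. Qed.

Lemma eqv_sym x y : eqv x y -> eqv y x. Proof. by case. Qed.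
Lemma eqv_refl x : eqv x x. Proof. by split; apply: lrefl. Qed.
Lemma eq0 x : le x 0 -> le 0 x -> x = 0. Proof. by move=> h1 h2; apply: lq1. Qed.

Lemma lneg1 x : le x 0 -> le 0 (- x).
Proof.
move=> h; have [->|nx] := eqVneq x 0; first by rewrite oppr0; apply: lrefl.
apply: (lq2' (z := - x) h).
- by case=> h1 h2; move/eqP: nx; apply; rewrite -[x]opprK (eq0 h2 h1) oppr0.
- by rewrite subrr.
- by rewrite add0r.
Qed.

Lemma lpos1 x : le 0 x -> ~ eqv x (- x) -> le (- x) 0.
Proof.
move=> h nx; apply: (lq2' (z := - x) h).
- exact: nx.
- by rewrite add0r.
- by rewrite subrr.
Qed.

Lemma posM a : eqv a (- a) -> le 0 a.
Proof.
move=> [h1 h2]; case: (ltot 0 a) => // h.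
exact: ltrans (lneg1 h) h2.
Qed.

Lemma aposM a : eqv a (- a) -> a <> 0 -> ~ le a 0.
Proof. by move=> h na h'; apply: na; apply: eq0 h' (posM h). Qed.

Lemma lclass x y : ~ eqv x (- x) -> eqv y x -> y = x.
Proof.
move=> nx [h1 h2].
have a1 : le 0 (y - x).
  apply: (lq2' (z := - x) h2).
  - by case=> u1 u2; apply: nx; split; [exact: ltrans h2 u1 | exact: ltrans u2 h1].
  - by rewrite subrr.
  - by [].
have a2 : le (y - x) 0.
  apply: (lq2' (z := - x) h1).
  - exact: nx.
  - by [].
  - by rewrite subrr.
by apply/eqP; rewrite -subr_eq0; apply/eqP; apply: eq0.
Qed.

Lemma otypeE x : otype le x <-> (x = 0 \/ ~ eqv x (- x)).
Proof.
split.
  move=> [hc ho]; have [->|nx] := eqVneq x 0; first by left.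
  right=> e; apply: ho; split; first by apply/eqP.
  have : - x = x by apply/hc; apply: eqv_sym.
  by move=> e'; rewrite -{1}e' addNr.
case=> [->|nx]; split.
- by move=> h; split; [apply: lq1 | move=> ->; apply: eqv_refl].
- by case.
- by move=> h; split; [apply: lclass | move=> ->; apply: eqv_refl].
- case=> _ e; apply: nx; have -> : - x = x.
    by apply/eqP; rewrite eq_sym -addr_eq0; apply/eqP.
  exact: eqv_refl.
Qed.

Lemma neg_noteqv x : le x 0 -> x <> 0 -> ~ eqv x (- x).
Proof.
move=> h nx [h1 h2]; apply: nx; apply: eq0 h (ltrans (lneg1 h) h2).
Qed.

Lemma domD a x : eqv a (- a) -> a <> 0 -> le x 0 -> x <> 0 -> ~ le a (- x).
Proof.
move=> ea na hx nx h.
have ap := posM ea; have an := aposM ea na.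
have nxx := neg_noteqv hx nx.
have s1 : le (- a) (- x) by apply: ltrans h; case: ea.
have s2 : le (- a + x) 0.
  apply: (lq2' (z := x) s1).
  - by move=> e; apply: nxx; apply: eqv_sym.
  - by [].
  - by rewrite addNr.
have s3' : le 0 (- a) by apply: ltrans ap _; case: ea.
have s3 : le x (- a + x).
  apply: (lq2' (z := x) s3').
  - move=> [e1 e2]; apply: an; apply: ltrans (ltrans _ e1) hx; by case: ea.
  - by rewrite add0r.
  - by [].
have s4 : le (x + a) x.
  apply: (lq2' (z := a) s3).
  - by move=> [e1 e2]; apply: an; apply: ltrans e2 s2.
  - by [].
  - by rewrite addrC addNKr.
apply: an; apply: (lq2' (z := - x) s4).
- exact: nxx.
- by rewrite addrC addKr.
- by rewrite subrr.
Qed.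

Lemma domD' a x : eqv a (- a) -> a <> 0 -> ~ eqv x (- x) -> ~ le a x.
Proof.
move=> ea na nx h.
have nx0 : x <> 0 by move=> e; apply: nx; rewrite e oppr0; apply: eqv_refl.
case: (ltot x 0) => hx.
  by apply: (aposM ea na); apply: ltrans h hx.
have hx' : le (- x) 0.
  apply: (lq2' (z := - x) hx).
  - exact: nx.
  - by rewrite add0r.
  - by rewrite subrr.
apply: (domD ea na hx'); first by move/eqP; rewrite oppr_eq0; move/eqP.
by rewrite opprK.
Qed.

Lemma otypeN x : otype le x -> otype le (- x).
Proof.
move/otypeE=> [->|nx]; apply/otypeE; first by left; rewrite oppr0.
by right; rewrite opprK => e; apply: nx; apply: eqv_sym.
Qed.

Lemma dom_o a x : ~ otype le a -> otype le x -> ~ le a x.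
Proof.
move=> na ox; have [a0 ea] : a <> 0 /\ eqv a (- a).
  split; first by move=> e; apply: na; apply/otypeE; left.
  by apply: NNPP => h; apply: na; apply/otypeE; right.
move: ox => /otypeE [->|nx]; first exact: aposM.
exact: domD'.
Qed.

Lemma otypeD x y : otype le x -> otype le y -> otype le (x + y).
Proof.
move=> ox oy; apply: NNPP => ns.
have oxn := otypeN ox; have oyn := otypeN oy.
have es : eqv (x + y) (- (x + y)).
  by apply: NNPP => h; apply: ns; apply/otypeE; right.
have d1 := dom_o ns ox; have d2 := dom_o ns oxn.
have d3 := dom_o ns oy; have d4 := dom_o ns oyn.
have lt a : ~ le (x + y) a -> le a (x + y) by move=> h; case: (ltot a (x + y)).
have h1 : le 0 x.
  apply: (lq2' (z := - y) (lt _ d3)).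
  - by move=> [e1 e2]; apply: d4.
  - by rewrite subrr.
  - by rewrite addrK.
have h2 : le 0 (- x).
  have u : le (- y) (- (x + y)) by apply: ltrans (lt _ d4) _; case: es.
  apply: (lq2' (z := y) u).
  - by move=> [e1 e2]; apply: d3; apply: ltrans e1; case: es.
  - by rewrite addNr.
  - by rewrite opprD subrK.
move/otypeE: ox => [ex|nx].
  by apply: ns; rewrite ex add0r.
have h3 : le x 0.
  have := lpos1 h2; rewrite opprK; apply=> e; apply: nx; exact: eqv_sym.
by apply: nx; rewrite (eq0 h3 h1) oppr0; exact: eqv_refl.
Qed.

Lemma otype_subgroup : subgroup (otype le).
Proof.
split; first by apply/otypeE; left.
by move=> x y ox oy; apply: otypeD => //; apply: otypeN.
Qed.

Lemma otype_convex : convex le (otype le).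
Proof.
move=> s t c os ot h1 h2; apply: NNPP => nc.
exact: (dom_o nc ot).
Qed.

Lemma dir2 (H : G -> Prop) : subgroup H -> convex le H ->
  quot_valuational le H -> forall g, otype le g -> H g.
Proof.
move=> [H0 Hs] Hc [d [Gam [v [_ [_ [_ [vN viff]]]]]]] g og.
apply: NNPP => ng.
have g0 : g <> 0 by move=> e; apply: ng; rewrite e.
have ng' : ~ eqv g (- g) by move/otypeE: og => [|].
have lr (o : option Gam) : le_inf o o by case: o => //= a; apply: Order.POrderTheory.lexx.
have q1 : quot_qle le H g (- g) by apply/viff; rewrite vN.
have q2 : quot_qle le H (- g) g by apply/viff; rewrite vN.
have Hgg : H (g - - g).
  apply: NNPP => nh.
  case: q1 => [//|[_ u1]].
  case: q2 => [u|[_ u2]]; first by apply: nh; have := Hs _ _ H0 u; rewrite sub0r opprB.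
  by apply: ng'; split.
case: (ltot g 0) => hg.
  apply: ng; apply: (Hc _ _ g Hgg H0); last exact: hg.
  apply: (lq2' (z := g) hg).
  - by move=> e; apply: g0; apply: lq1; apply: eqv_sym.
  - by rewrite opprK.
  - by rewrite add0r.
have hg' := lpos1 hg ng'.
apply: ng; apply: (Hc _ _ g H0 Hgg); first exact: hg.
apply: (lq2' (z := g - - g) hg').
- move=> e; apply: ng'; have e0 := lq1 (eqv_sym e).
  have : g = - g by apply/eqP; rewrite -subr_eq0; apply/eqP.
  by move=> e1; rewrite {1}e1; apply: eqv_refl.
- by rewrite opprK addKr.
- by rewrite add0r.
Qed.
End Basic.

Fact tt_disp : Order.disp_t. Proof. exact: Order.Disp tt tt. Qed.
Definition pb (P : Prop) : bool := if excluded_middle_informative P then true else false.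
Lemma pbP P : reflect P (pb P).
Proof. rewrite /pb; case: excluded_middle_informative => h; constructor; done. Qed.

Section Quot.
Variables (G : zmodType) (le : G -> G -> Prop).
Hypothesis hG : compatible_qo le.
Local Notation eqv := (qeq le).
Variable H : G -> Prop.
Hypotheses (hsub : subgroup H) (hconv : convex le H) (hO : forall g, otype le g -> H g).

Lemma H0 : H 0. Proof. by case: hsub. Qed.
Lemma HB x y : H x -> H y -> H (x - y). Proof. by case: hsub => _; apply. Qed.
Lemma HN x : H x -> H (- x). Proof. by move=> h; have := HB H0 h; rewrite sub0r. Qed.
Lemma HD x y : H x -> H y -> H (x + y).
Proof. by move=> h1 h2; have := HB h1 (HN h2); rewrite opprK. Qed.

Lemma notH_M a : ~ H a -> a <> 0 /\ eqv a (- a).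
Proof.
move=> na; split; first by move=> e; apply: na; rewrite e; apply: H0.
apply: NNPP => h; apply: na; apply: hO; apply/(otypeE hG); right; exact: h.
Qed.

Lemma hB h a : H h -> ~ H a -> ~ le a h.
Proof.
move=> hh na l; apply: (na); apply: (hconv H0 hh) => //.
by apply: (posM hG); case: (notH_M na).
Qed.

Lemma hB' h a : H h -> ~ H a -> le h a.
Proof. by move=> hh na; case: (ltot hG h a) => // l; exfalso; apply: (hB hh na l). Qed.

Lemma notH_add u h : ~ H u -> H h -> ~ H (u + h).
Proof. by move=> nu hh e; apply: nu; have := HB e hh; rewrite addrK. Qed.

Lemma A1 h : H h -> le h 0 -> forall u, ~ H u -> le (u + h) u.
Proof.
move=> hh l u nu; have [->|n0] := eqVneq h 0; first by rewrite addr0; apply: lrefl.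
apply: (lq2' hG (z := u) l).
- by move=> e; case: (notH_M nu) => u0 _; apply: u0; apply: (lq1 hG); apply: eqv_sym.
- by rewrite addrC.
- by rewrite add0r.
Qed.

Lemma A2 h : H h -> le h 0 -> forall u, ~ H u -> le (u - h) u.
Proof.
move=> hh l u nu.
have nu' : ~ H (- u) by move=> e; apply: nu; rewrite -[u]opprK; apply: HN.
have a := A1 hh l nu'.
have nuh : ~ H (u - h) by apply: notH_add => //; apply: HN.
case: (notH_M nuh) => _ [e1 _]; case: (notH_M nu) => _ [_ e2].
apply: (ltrans hG e1); rewrite opprB addrC; apply: (ltrans hG a e2).
Qed.

Lemma A3 h : H h -> le 0 h -> forall u, ~ H u -> le u (u + h).
Proof.
move=> hh l u nu.
apply: (lq2' hG (z := u) l).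
- by move=> [_ e1]; exact: (hB hh nu e1).
- by rewrite add0r.
- by rewrite addrC.
Qed.

Lemma A4 h : H h -> le 0 h -> forall u, ~ H u -> le u (u - h).
Proof.
move=> hh l u nu.
have nu' : ~ H (- u) by move=> e; apply: nu; rewrite -[u]opprK; apply: HN.
have a := A3 hh l nu'.
have nuh : ~ H (u - h) by apply: notH_add => //; apply: HN.
case: (notH_M nuh) => _ [_ e1]; case: (notH_M nu) => _ [e2 _].
apply: (ltrans hG e2); apply: (ltrans hG a).
have -> : - u + h = - (u - h) by rewrite opprB addrC.
exact: e1.
Qed.

Lemma Abs u h : ~ H u -> H h -> eqv (u + h) u.
Proof.
move=> nu hh; have nuh := notH_add nu hh.
case: (ltot hG h 0) => l.
  split; first exact: A1.
  by have := A2 hh l nuh; rewrite addrK.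
split; last exact: A3.
by have := A4 hh l nuh; rewrite addrK.
Qed.

Lemma Abs' a a' : ~ H a -> H (a' - a) -> eqv a' a.
Proof. by move=> na h; have := Abs na h; rewrite addrC subrK. Qed.

Definition qq a b := quot_qle le H a b.

Lemma qqE a b : qq a b <-> H (a - b) \/ le a b.
Proof.
rewrite /qq /quot_qle; split; first by case=> [|[]]; [left|right].
by case=> h; [left | case: (classic (H (a - b))) => h'; [left|right]].
Qed.

Lemma Hsym a b : H (a - b) -> H (b - a). Proof. by move/HN; rewrite opprB. Qed.

Lemma Htr a b c : H (a - b) -> H (b - c) -> H (a - c).
Proof. by move=> h1 h2; have := HD h1 h2; rewrite addrA subrK. Qed.

Lemma Inv_l a a' b : H (a' - a) -> ~ H (a - b) -> le a b -> le a' b.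
Proof.
move=> h nh l; case: (classic (H a)) => ha.
  have ha' : H a' by have := HD h ha; rewrite subrK.
  apply: hB' => // hb; apply: nh; exact: HB.
by case: (Abs' ha h) => e _; exact: (ltrans hG e l).
Qed.

Lemma Inv_r a b b' : H (b' - b) -> ~ H (a - b) -> le a b -> le a b'.
Proof.
move=> h nh l; case: (classic (H b)) => hb.
  exfalso; apply: (hB hb) l => ha; apply: nh; exact: HB.
by case: (Abs' hb h) => _ e; exact: (ltrans hG l e).
Qed.

Lemma qq_refl a : qq a a. Proof. by apply/qqE; left; rewrite subrr; apply: H0. Qed.

Lemma qq_total a b : qq a b \/ qq b a.
Proof. by case: (ltot hG a b) => l; [left|right]; apply/qqE; right. Qed.

Lemma qq_trans a b c : qq a b -> qq b c -> qq a c.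
Proof.
move=> /qqE [h1|l1] /qqE [h2|l2]; apply/qqE.
- by left; apply: Htr h1 h2.
- case: (classic (H (a - c))) => hac; [by left | right].
  apply: (Inv_l h1 _ l2).
  by move=> e; apply: hac; apply: Htr h1 e.
- case: (classic (H (a - c))) => hac; [by left | right].
  apply: (Inv_r (Hsym h2) _ l1).
  by move=> e; apply: hac; apply: Htr e h2.
- by right; exact: (ltrans hG l1 l2).
Qed.

Lemma qq_Hl b a : H b -> qq b a.
Proof.
move=> hb; apply/qqE; case: (classic (H a)) => ha; first by left; apply: HB.
by right; apply: hB'.
Qed.

Lemma qq_Hr b a : H b -> ~ H a -> ~ qq a b.
Proof.
move=> hb na /qqE [h|l]; last exact: (hB hb na l).
by apply: na; have := HD h hb; rewrite subrK.
Qed.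

Lemma qq_negl a : qq a (- a).
Proof.
apply/qqE; case: (classic (H a)) => ha; first by left; apply: HB => //; apply: HN.
by right; case: (notH_M ha) => _ [].
Qed.

Lemma qq_negr a : qq (- a) a.
Proof.
apply/qqE; case: (classic (H a)) => ha; first by left; apply: HB => //; apply: HN.
by right; case: (notH_M ha) => _ [].
Qed.

Lemma qq_add a b : qq (a + b) a \/ qq (a + b) b.
Proof.
case: (classic (H b)) => hb; first by left; apply/qqE; left; rewrite addrC addKr.
case: (classic (H a)) => ha; first by right; apply/qqE; left; rewrite addrK.
case: (classic (H (a + b))) => hs; first by left; apply: qq_Hl.
case: (classic (le (a + b) a)) => l1; first by left; apply/qqE; right.
case: (classic (le (a + b) b)) => l2; first by right; apply/qqE; right.
exfalso.
have [_ es] := notH_M hs; have [_ ea] := notH_M ha.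
have m1 : le a (a + b) by case: (ltot hG a (a + b)).
have m2 : le b (a + b) by case: (ltot hG b (a + b)).
have m3 : le a (- (a + b)) by apply: (ltrans hG m1); case: es.
have m4 : le (a + b) (- a).
  apply: (lq2' hG (z := b) m3).
  - move=> [e1 _]; apply: l2; exact: (ltrans hG (proj1 es) e1).
  - by [].
  - by rewrite opprD subrK.
by apply: l1; apply: (ltrans hG m4); case: ea.
Qed.

Definition rep (a : G) : G :=
  epsilon (inhabits (0 : G)) (fun b => qq a b /\ qq b a).

Lemma rep_spec a : qq a (rep a) /\ qq (rep a) a.
Proof. by apply: (epsilon_spec (inhabits (0 : G)) (fun b => qq a b /\ qq b a)); exists a; split; apply: qq_refl. Qed.

Lemma rep_eq a b : qq a b -> qq b a -> rep a = rep b.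
Proof.
move=> h1 h2; rewrite /rep; congr epsilon.
apply: functional_extensionality => c; apply: propositional_extensionality.
split=> -[u1 u2]; split.
- exact: qq_trans h2 u1.
- exact: qq_trans u2 h1.
- exact: qq_trans h1 u1.
- exact: qq_trans u2 h2.
Qed.

Lemma rep_idem a : rep (rep a) = rep a.
Proof. by case: (rep_spec a) => h1 h2; apply: rep_eq. Qed.

Definition Gam : Type := {x : G | rep x == x}.
HB.instance Definition _ := Choice.on Gam.
Definition gle (x y : Gam) := pb (qq (val y) (val x)).
Lemma gle_refl : reflexive gle. Proof. by move=> x; apply/pbP; apply: qq_refl. Qed.
Lemma gle_anti : antisymmetric gle.
Proof.
move=> x y /andP [/pbP h1 /pbP h2]; apply: val_inj.
case: x y h1 h2 => [x ex] [y ey] /= h1 h2.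
by rewrite -(eqP ex) -(eqP ey); apply: rep_eq.
Qed.
Lemma gle_trans : transitive gle.
Proof. by move=> y x z /pbP h1 /pbP h2; apply/pbP; apply: qq_trans h2 h1. Qed.
Lemma gle_total : total gle.
Proof.
move=> x y; rewrite /gle; case: (qq_total (val x) (val y)) => h; apply/orP;
  [right|left]; exact/pbP.
Qed.
HB.instance Definition _ := @Order.Le_isPOrder.Build tt_disp Gam gle gle_refl gle_anti gle_trans.
HB.instance Definition _ := @Order.POrder_isTotal.Build tt_disp Gam gle_total.

Definition toGam (a : G) : Gam := exist _ (rep a) (introT eqP (rep_idem a)).
Definition v (a : G) : option Gam := if pb (H a) then None else Some (toGam a).

Lemma v_coset a b : H (a - b) -> v a = v b.
Proof.
move=> h; rewrite /v.
have e : H a <-> H b.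
  split=> u; first by have := HB u h; rewrite opprB addrC subrK.
  by have := HD h u; rewrite subrK.
case: pbP => ha; case: pbP => hb //; try by exfalso; firstorder.
congr Some; apply: val_inj => /=; apply: rep_eq; apply/qqE; left => //.
exact: Hsym.
Qed.

Lemma vNone a : v a = None <-> H a.
Proof. by rewrite /v; case: pbP. Qed.

Lemma viff a b : qq a b <-> le_inf (v b) (v a).
Proof.
rewrite /v; case: pbP => hb; case: pbP => ha /=.
- by split=> // _; apply: qq_Hl.
- by split=> // h; exfalso; apply: (qq_Hr hb ha h).
- by split=> // _; apply: qq_Hl.
- rewrite -/(gle _ _); split.
    move=> h; apply/pbP => /=.
    case: (rep_spec a) => _ u1; case: (rep_spec b) => u2 _.
    exact: qq_trans (qq_trans u1 h) u2.
  move/pbP => /= h.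
  case: (rep_spec a) => u1 _; case: (rep_spec b) => _ u2.
  exact: qq_trans (qq_trans u1 h) u2.
Qed.

Lemma le_inf_trans (x y z : option Gam) : le_inf x y -> le_inf y z -> le_inf x z.
Proof.
case: x => [x|]; case: y => [y|]; case: z => [z|] //=.
exact: Order.POrderTheory.le_trans.
Qed.

Lemma le_inf_total (x y : option Gam) : le_inf x y || le_inf y x.
Proof. by case: x => [x|]; case: y => [y|] //=; apply: Order.TotalTheory.le_total. Qed.

Lemma vmin a b : le_inf (min_inf (v a) (v b)) (v (a + b)).
Proof.
rewrite /min_inf; case: (qq_add a b) => /viff h; case: ifP => // l.
- have := le_inf_total (v a) (v b); rewrite l /= => l'.
  exact: le_inf_trans l' h.
- exact: le_inf_trans l h.
Qed.

Lemma vneg a : v (- a) = v a.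
Proof.
rewrite /v.
have e : H (- a) <-> H a by split=> u; [rewrite -[a]opprK|]; apply: HN.
case: pbP => ha; case: pbP => hb //; try by exfalso; firstorder.
congr Some; apply: val_inj => /=; apply: rep_eq; [apply: qq_negr | apply: qq_negl].
Qed.

Lemma dir1 : quot_valuational le H.
Proof.
exists tt_disp, Gam, v; split; first exact: v_coset.
split; first exact: vNone.
split; first exact: vmin.
split; first exact: vneg.
exact: viff.
Qed.
End Quot.

Theorem mainTheorem10 (G : zmodType) (qle : G -> G -> Prop)
  (hG : compatible_qo qle) :
  (forall H : G -> Prop, subgroup H -> convex qle H ->
     (quot_valuational qle H <-> (forall g, otype qle g -> H g))) /\
  (subgroup (otype qle) /\ convex qle (otype qle) /\
   quot_valuational qle (otype qle) /\
   forall H : G -> Prop, subgroup H -> convex qle H ->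
     quot_valuational qle H -> forall g, otype qle g -> H g).
Proof.
split.
  move=> H hs hc; split; first exact: dir2.
  by move=> hO; apply: dir1.
split; first exact: otype_subgroup.
split; first exact: otype_convex.
split; first by apply: dir1 => //; [exact: otype_subgroup | exact: otype_convex].
by move=> H hs hc hv; apply: dir2.
Qed.
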